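(* Let $\mathcal{B}$ be a $\sigma$-algebra on a nonempty set $E$, let $\nu$ be an optimal measure on $\mathcal{B}$, and let $(H_n)_{n\in N}$ be an at most countable collection of pairwise disjoint $\nu$-atoms $H_n\in\mathcal{B}$ such that for every $B\in\mathcal{B}$ the supremum $\sup_{n\in N}\nu(B\cap H_n)$ is attained and equals $\nu(B)$. Then $|\nu|=\sum_{n\in N}\nu(H_n)$. In particular, $\nu$ is of bounded variation if and only if $\sum_{n\in N}\nu(H_n)<\infty$.
   Context: An optimal measure is a map $\nu:\mathcal{B}\to[0,\infty]$ with $\nu(\emptyset)=0$, $\nu(B\cup B')=\max(\nu(B),\nu(B'))$, continuous from below ($\nu(\bigcup_nB_n)=\lim_n\nu(B_n)$ for nondecreasing sequences) and from above ($\nu(\bigcap_nB_n)=\lim_n\nu(B_n)$ for nonincreasing sequences). A $\nu$-atom is $H\in\mathcal{B}$ with $\nu(H)>0$ such that for each $B\in\mathcal{B}$ either $\nu(H\setminus B)=0$ or $\nu(H\cap B)=0$. (For every optimal measure such a collection $(H_n)$ exists.) $|\nu|=\sup_\pi\sum_{B\in\pi}\nu(B)$, the supremum over finite partitions $\pi$ of $E$ into elements of $\mathcal{B}$; $\nu$ is of bounded variation if $|\nu|<\infty$. *)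

(* Defs.v *)
From HB Require Import structures.
From mathcomp Require Import all_boot all_order all_algebra.
From mathcomp Require Import all_classical all_reals all_analysis.
Set Implicit Arguments. Unset Strict Implicit. Unset Printing Implicit Defensive.
Import Order.TTheory GRing.Theory Num.Theory.
Local Open Scope classical_set_scope.
Local Open Scope ring_scope.
Local Open Scope ereal_scope.

(* The sigma-algebra B on E is the measurable sets of T : measurableType d. *)

Definition optimal_measure {d} {T : measurableType d} {R : realType}
  (nu : set T -> \bar R) : Prop :=
  [/\ (forall A, measurable A -> 0 <= nu A),
      nu set0 = 0,
      (forall A B, measurable A -> measurable B ->
         nu (A `|` B) = maxe (nu A) (nu B)),
      (forall F : nat -> set T, (forall n, measurable (F n)) ->
         (forall n, F n `<=` F n.+1) ->
         (fun n => nu (F n)) @ \oo --> nu (\bigcup_n F n)) &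
      (forall F : nat -> set T, (forall n, measurable (F n)) ->
         (forall n, F n.+1 `<=` F n) ->
         (fun n => nu (F n)) @ \oo --> nu (\bigcap_n F n))].

Definition nu_atom {d} {T : measurableType d} {R : realType}
  (nu : set T -> \bar R) (H : set T) : Prop :=
  [/\ measurable H, 0 < nu H &
      forall B, measurable B -> nu (H `\` B) = 0 \/ nu (H `&` B) = 0].

Definition finite_partition {d} {T : measurableType d} (s : seq (set T)) : Prop :=
  [/\ (forall i, (i < size s)%N -> measurable (nth set0 s i)),
      (forall i j, (i < size s)%N -> (j < size s)%N -> i != j ->
         nth set0 s i `&` nth set0 s j = set0) &
      \big[setU/set0]_(A <- s) A = setT].

Definition abs_variation {d} {T : measurableType d} {R : realType}
  (nu : set T -> \bar R) : \bar R :=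
  ereal_sup [set \sum_(A <- s) nu A | s in finite_partition].

(* Main.v *)
Require Import Defs.
From HB Require Import structures.
From mathcomp Require Import all_boot all_order all_algebra.
From mathcomp Require Import all_classical all_reals all_analysis.
Import Order.TTheory GRing.Theory Num.Theory.
Local Open Scope classical_set_scope.
Local Open Scope ring_scope.
Local Open Scope ereal_scope.

Section S.
Context {d : measure_display} {T : measurableType d} {R : realType}
  {nu : set T -> \bar R}.

Lemma nu_mono : optimal_measure nu -> forall A B, measurable A -> measurable B ->
  A `<=` B -> nu A <= nu B.
Proof.
case=> _ _ hU _ _ A B mA mB AB.
have -> : B = A `|` B by rewrite setUidr.
by rewrite hU // le_max lexx.
Qed.

Lemma nth_sub_big (l : seq (set T)) i : (i < size l)%N ->
  nth set0 l i `<=` \big[setU/set0]_(X <- l) X.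
Proof.
elim: l i => [|a l IH] [|i] //= hi; rewrite big_cons.
  exact: subsetUl.
apply: subset_trans (IH _ hi) _; exact: subsetUr.
Qed.

Lemma big_meas (l : seq (set T)) : (forall X, X \in l -> measurable X) ->
  measurable (\big[setU/set0]_(X <- l) X).
Proof.
elim: l => [|a l IH] h; first by rewrite big_nil.
rewrite big_cons; apply: measurableU; first by apply: h; rewrite inE eqxx.
by apply: IH => X hX; apply: h; rewrite inE hX orbT.
Qed.
End S.

Theorem proposition6p7 (d : measure_display) (T : measurableType d)
  (R : realType) (x0 : T) (nu : set T -> \bar R)
  (N : set nat) (H : nat -> set T) :
  optimal_measure nu ->
  (forall n, n \in N -> nu_atom nu (H n)) ->
  (forall n m, n \in N -> m \in N -> n <> m -> H n `&` H m = set0) ->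
  (forall B, measurable B ->
     nu B = ereal_sup [set nu (B `&` H n) | n in N] /\
     exists2 n, n \in N & nu (B `&` H n) = ereal_sup [set nu (B `&` H m) | m in N]) ->
  abs_variation nu = \sum_(n <oo | n \in N) nu (H n) /\
  (abs_variation nu < +oo <-> \sum_(n <oo | n \in N) nu (H n) < +oo).
Proof.
move=> hopt hat hdisj hsup.
have nu0 : forall A, measurable A -> 0 <= nu A by case: hopt.
have mono := nu_mono hopt.
have Hm : forall n, n \in N -> measurable (H n) by move=> n /hat [].
have u0 : forall n, (0 <= n)%N -> n \in N -> 0 <= nu (H n).
  by move=> n _ /Hm /nu0.
suff -> : abs_variation nu = \sum_(n <oo | n \in N) nu (H n) by [].
apply/eqP; rewrite eq_le; apply/andP; split.
-
  apply: ge_ereal_sup => _ [s [sm sdisj sU] <-].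
  rewrite (big_nth set0) big_mkord.
  set k := size s.
  pose u (i : 'I_k) := nth set0 s i.
  have mu : forall i, measurable (u i) by move=> i; exact: sm.
  have hex : forall i : 'I_k, exists n, n \in N /\ nu (u i) = nu (u i `&` H n).
    move=> i; have [e [n nN en]] := hsup _ (mu i).
    by exists n; split => //; rewrite en.
  have [f hf] := boolp.choice hex.
  have [M fM] : exists M, forall i, (f i < M)%N.
    exists (\max_(i < k) (f i).+1)%N => i.
    exact: (@leq_bigmax _ (fun i : 'I_k => (f i).+1) i).
  apply: (@le_trans _ _ (\sum_(i < k) \sum_(n < M | (n : nat) \in N) nu (u i `&` H n))%E).
    apply: lee_sum => i _; rewrite (hf i).2.
    rewrite (bigD1 (Ordinal (fM i))) /=; last exact: (hf i).1.
    apply: leeDl; apply: sume_ge0 => n /andP[nN _].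
    by apply: nu0; apply: measurableI => //; apply: Hm.
  rewrite exchange_big /=.
  apply: (@le_trans _ _ (\sum_(n < M | (n : nat) \in N) nu (H n))%E); last first.
    rewrite -(big_mkord (fun n => n \in N) (fun n => nu (H n))).
    exact: nneseries_lim_ge.
  apply: lee_sum => n nN.
  have mHn := Hm _ nN.
  have key : forall i j : 'I_k, i != j -> nu (u i `&` H n) != 0 -> nu (u j `&` H n) = 0.
    move=> i j ij hi.
    have [_ _ at3] := hat _ nN.
    case: (at3 _ (mu i)) => h; last by rewrite setIC h eqxx in hi.
    apply/eqP; rewrite eq_le nu0 ?andbT; last exact: measurableI.
    rewrite -h; apply: mono => //; first exact: measurableI.
      exact: measurableD.
    move=> x [ujx Hx]; split => // uix.
    have : (u i `&` u j) x by [].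
    by rewrite /u sdisj.
  case: (pselect (exists i, nu (u i `&` H n) != 0)) => [[i0 hi0]|hno].
    rewrite (bigD1 i0) //= big1 ?adde0.
      by apply: mono => //; exact: measurableI.
    by move=> j ji; apply: (key i0) => //; rewrite eq_sym.
  rewrite big1 ?nu0 // => i _.
  by apply/eqP; apply: contrapT => hi; apply: hno; exists i; apply/negP.
-
  apply: lime_le; first exact: is_cvg_nneseries u0.
  apply: nearW => m /=.
  pose fl := [seq n <- iota 0 m | n \in N].
  pose l := [seq H n | n <- fl].
  pose U := \big[setU/set0]_(X <- l) X.
  have lN : forall i, (i < size fl)%N -> nth 0%N fl i \in N.
    move=> i hi; have := mem_nth 0%N hi; rewrite mem_filter => /andP[] //.
  have mU : measurable U.
    apply: big_meas => X /mapP [n]; rewrite mem_filter => /andP[nN _] ->; exact: Hm.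
  apply: (@le_trans _ _ (\sum_(A <- rcons l (~` U)) nu A)%E).
    rewrite -cats1 big_cat big_seq1 /= big_map big_filter /index_iota subn0.
    apply: leeDl; apply: nu0; exact: measurableC.
  apply: ereal_sup_ubound; exists (rcons l (~` U)); last by [].
  have sl : size l = size fl by rewrite size_map.
  have uf : uniq fl by rewrite filter_uniq // iota_uniq.
  split.
  - move=> i; rewrite size_rcons ltnS nth_rcons => hi.
    case: ltnP => hil.
      by rewrite /l (nth_map 0%N) -?sl //; apply: Hm; apply: lN; rewrite -sl.
    have -> : i == size l by rewrite eqn_leq hi hil.
    exact: measurableC.
  - move=> i j; rewrite size_rcons !ltnS => hi hj ij; rewrite !nth_rcons.
    case: (ltnP i (size l)) => hil; case: (ltnP j (size l)) => hjl.
    + rewrite /l !(nth_map 0%N) -?sl //; apply: hdisj; try (apply: lN; rewrite -?sl //).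
      by move/eqP; rewrite nth_uniq -?sl // (negbTE ij).
    + have -> : j == size l by rewrite eqn_leq hj hjl.
      apply/seteqP; split => // x [hx hU]; apply: hU; by apply: (nth_sub_big _ _ hil).
    + have -> : i == size l by rewrite eqn_leq hi hil.
      apply/seteqP; split => // x [hU hx]; apply: hU; by apply: (nth_sub_big _ _ hjl).
    + have ei : i = size l by apply/eqP; rewrite eqn_leq hi hil.
      have ej : j = size l by apply/eqP; rewrite eqn_leq hj hjl.
      by rewrite ei ej eqxx in ij.
  - by rewrite -cats1 big_cat big_seq1 /=; exact: setUv.
Qed.
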